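(* Let $d,n$ be positive integers and let $\xi_1,\ldots,\xi_n$ be independent Rademacher random variables (uniform on $\{1,-1\}$). Let $\mathbf{u}_1,\ldots,\mathbf{u}_n\in\mathbb{C}^d$ form a tight frame, i.e. $\sum_{i=1}^n\mathbf{u}_i\mathbf{u}_i^*=C\cdot\mathbf{I}$ for some constant $C>0$, and set $\sigma^2=\big\|\sum_{i=1}^n(\mathbf{u}_i\mathbf{u}_i^* )^2\big\|$. Then $$\min_{\varepsilon_1,\ldots,\varepsilon_n\in\{1,-1\}}\Big\|\sum_{i=1}^n\varepsilon_i\mathbf{u}_i\mathbf{u}_i^*\Big\|\le\sqrt{\frac{n}{d}}\cdot\sigma.$$ Moreover, if $\mathbf{u}_1,\ldots,\mathbf{u}_n$ form a unit-norm tight frame, i.e. $\|\mathbf{u}_i\|=1$ for all $i$ and $\sum_{i=1}^n\mathbf{u}_i\mathbf{u}_i^*=\frac{n}{d}\mathbf{I}$, and $d\le n\le 2d-1$, then $$\min_{\varepsilon_1,\ldots,\varepsilon_n\in\{1,-1\}}\Big\|\sum_{i=1}^n\varepsilon_i\mathbf{u}_i\mathbf{u}_i^*\Big\|=\sqrt{\frac{n}{d}}\cdot\sigma.$$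
   Context: $\|\cdot\|$ is the spectral norm. (The left-hand side is the matrix discrepancy $\min_{\varepsilon_i\in\{\pm1\}}\|\sum_i\mathbb{E}[\xi_i]\mathbf{u}_i\mathbf{u}_i^*-\sum_i\varepsilon_i\mathbf{u}_i\mathbf{u}_i^*\|$, with $\mathbb{E}[\xi_i]=0$.) *)

(* Defs.v *)
From HB Require Import structures.
From mathcomp Require Import all_boot all_order all_algebra.
From mathcomp Require Import all_classical all_reals.
From mathcomp Require Import complex.
Set Implicit Arguments. Unset Strict Implicit. Unset Printing Implicit Defensive.
Import Order.TTheory GRing.Theory Num.Theory.
Local Open Scope ring_scope.
Local Open Scope classical_set_scope.

Section Defs.
Variable R : realType.

Definition vnorm (d : nat) (v : 'cV[R[i]]_d) : R :=
  Num.sqrt (\sum_(k < d) ComplexField.Normc.normc (v k 0) ^+ 2).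

Definition adjmx (m p : nat) (A : 'M[R[i]]_(m, p)) : 'M[R[i]]_(p, m) :=
  (map_mx (@conjc R) A)^T.

Definition specnorm (d : nat) (A : 'M[R[i]]_d) : R :=
  sup [set vnorm (A *m v) | v in [set v : 'cV[R[i]]_d | vnorm v = 1]].

Definition outer (d : nat) (u : 'cV[R[i]]_d) : 'M[R[i]]_d := u *m adjmx u.

Definition sgn (b : bool) : R[i] := if b then 1 else -1.

Definition signed_norm (d n : nat) (u : 'I_n -> 'cV[R[i]]_d)
  (e : {ffun 'I_n -> bool}) : R :=
  specnorm (\sum_(i < n) sgn (e i) *: outer (u i)).

(* min over all 2^n signings (the seed value is itself one of the values) *)
Definition min_disc (d n : nat) (u : 'I_n -> 'cV[R[i]]_d) : R :=
  \big[Num.min/ signed_norm u [ffun=> true]]_(e : {ffun 'I_n -> bool})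
     signed_norm u e.
End Defs.

(* Main.v *)
Require Import Defs.
From HB Require Import structures.
From mathcomp Require Import all_boot all_order all_algebra.
From mathcomp Require Import all_classical all_reals.
From mathcomp Require Import complex.
From mathcomp Require Import ring lra zify.
Import Order.TTheory GRing.Theory Num.Theory.
Local Open Scope ring_scope.
Set Implicit Arguments. Unset Strict Implicit. Unset Printing Implicit Defensive.

Section Aux.
Variable R : realType.
Local Notation nc := (@ComplexField.Normc.normc R).

Lemma nc_ge0 (z : R[i]) : 0 <= nc z.
Proof. by case: z => a b /=; exact: sqrtr_ge0. Qed.

Lemma mulcJ (z : R[i]) : z * conjc z = real_complex R (nc z ^+ 2).
Proof.
case: z => a b /=; rewrite sqr_sqrtr ?addr_ge0 ?sqr_ge0 //.
apply/eqP; rewrite eq_complex /=; apply/andP; split; apply/eqP.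
  by rewrite !expr2; ring.
by ring.
Qed.

Lemma nc_real (x : R) : nc (real_complex R x) = `|x|.
Proof. by rewrite /= expr0n /= addr0 sqrtr_sqr. Qed.

Lemma nc_conj (z : R[i]) : nc (conjc z) = nc z.
Proof. by case: z => a b /=; rewrite sqrrN. Qed.

Lemma nc_sum (I : finType) (F : I -> R[i]) : nc (\sum_i F i) <= \sum_i nc (F i).
Proof.
elim/big_ind2: _ => //; first by rewrite ComplexField.Normc.normc0.
move=> x1 x2 y1 y2 h1 h2; apply: le_trans (le_normcD _ _) _; exact: lerD.
Qed.

Lemma sum_sqr_le (I : finType) (a : I -> R) : (forall i, 0 <= a i) ->
  \sum_i a i ^+ 2 <= (\sum_i a i) ^+ 2.
Proof.
move=> h; rewrite /index_enum; elim: (Finite.enum I) => [|x s IH].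
  by rewrite !big_nil expr0n.
rewrite !big_cons.
have hs : 0 <= \sum_(j <- s) a j by apply: sumr_ge0 => j _.
have := h x; nra.
Qed.

Lemma vnorm_ge0 d (v : 'cV[R[i]]_d) : 0 <= vnorm v.
Proof. exact: sqrtr_ge0. Qed.

Lemma vnorm_sqr d (v : 'cV[R[i]]_d) :
  vnorm v ^+ 2 = \sum_k nc (v k 0) ^+ 2.
Proof. by rewrite sqr_sqrtr // sumr_ge0 // => k _; rewrite sqr_ge0. Qed.

Lemma vnorm_entry d (v : 'cV[R[i]]_d) k : nc (v k 0) <= vnorm v.
Proof.
rewrite -(ger0_norm (nc_ge0 _)) -sqrtr_sqr ler_sqrt; last first.
  by apply: sumr_ge0 => j _; rewrite sqr_ge0.
rewrite (bigD1 k) //= lerDl; apply: sumr_ge0 => j _; exact: sqr_ge0.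
Qed.

Lemma vnorm_le_sum d (v : 'cV[R[i]]_d) : vnorm v <= \sum_k nc (v k 0).
Proof.
rewrite -(ger0_norm (sumr_ge0 _ (fun k _ => nc_ge0 (v k 0)))) -sqrtr_sqr.
rewrite ler_sqrt ?sqr_ge0 //; apply: sum_sqr_le => k; exact: nc_ge0.
Qed.

Lemma vnormZ d (c : R[i]) (v : 'cV[R[i]]_d) : vnorm (c *: v) = nc c * vnorm v.
Proof.
rewrite /vnorm.
under eq_bigr => k _ do rewrite mxE ComplexField.Normc.normcM exprMn.
rewrite -mulr_sumr sqrtrM ?sqr_ge0 // sqrtr_sqr ger0_norm //; exact: nc_ge0.
Qed.

Lemma vnorm_eq0 d (v : 'cV[R[i]]_d) : vnorm v = 0 -> v = 0.
Proof.
move=> h; apply/matrixP => k j; rewrite (ord1 j) mxE.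
apply: ComplexField.Normc.eq0_normc; apply/le_anti; rewrite nc_ge0 andbT.
by rewrite -h vnorm_entry.
Qed.

Lemma vnorm_delta d (k : 'I_d) : vnorm (delta_mx k 0 : 'cV[R[i]]_d) = 1.
Proof.
rewrite /vnorm (bigD1 k) //= big1 ?addr0; last first.
  move=> j /negbTE hj; rewrite mxE hj /= expr0n addr0 sqrtr0.
  by rewrite expr0n.
by rewrite mxE !eqxx /= expr0n expr1n addr0 sqrtr1 expr1n sqrtr1.
Qed.

Lemma specnorm_bound d (A : 'M[R[i]]_d) :
  exists M, forall v, vnorm v = 1 -> vnorm (A *m v) <= M.
Proof.
exists (\sum_k \sum_j nc (A k j)) => v hv.
apply: (le_trans (vnorm_le_sum (A *m v))); apply: ler_sum => k _; rewrite mxE.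
apply: (le_trans (nc_sum _)); apply: ler_sum => j _.
rewrite ComplexField.Normc.normcM -[X in _ <= X]mulr1 ler_wpM2l ?nc_ge0 //.
by rewrite -hv vnorm_entry.
Qed.

Lemma specnorm_ge d (A : 'M[R[i]]_d) v : vnorm v = 1 -> vnorm (A *m v) <= specnorm A.
Proof.
move=> hv; apply: sup_upper_bound; last by exists v.
split; first by exists (vnorm (A *m v)); exists v.
have [M hM] := specnorm_bound A; exists M => x [w hw <-]; exact: hM.
Qed.

Lemma specnorm_geZ d (A : 'M[R[i]]_d) v : v != 0 ->
  vnorm (A *m v) <= specnorm A * vnorm v.
Proof.
move=> hv0; have hc : 0 < vnorm v.
  rewrite lt_def vnorm_ge0 andbT; apply/eqP => /vnorm_eq0 h; by rewrite h eqxx in hv0.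
set w := (real_complex R (vnorm v)^-1) *: v.
have hw : vnorm w = 1 by rewrite vnormZ nc_real ger0_norm ?invr_ge0 ?ltW // mulVf // gt_eqF.
have := specnorm_ge A hw; rewrite -scalemxAr vnormZ nc_real.
have hi : 0 <= (vnorm v)^-1 by rewrite invr_ge0 ltW.
rewrite (ger0_norm hi) => h.
have := ler_wpM2r (ltW hc) h; by rewrite mulrAC mulVf ?gt_eqF // mul1r.
Qed.

Lemma specnorm_scalar d (hd : (0 < d)%N) (c : R) : 0 <= c ->
  specnorm ((real_complex R c)%:M : 'M[R[i]]_d) = c.
Proof.
move=> hc; set k : 'I_d := Ordinal hd.
have e1 := vnorm_delta k.
apply/le_anti/andP; split.
  apply: ge_sup; first by exists (vnorm ((real_complex R c)%:M *m delta_mx k 0)); exists (delta_mx k 0).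
  move=> x [w hw <-]; by rewrite mul_scalar_mx vnormZ hw nc_real mulr1 ger0_norm.
have := specnorm_ge ((real_complex R c)%:M) e1.
by rewrite mul_scalar_mx vnormZ e1 nc_real mulr1 ger0_norm.
Qed.

Lemma cs_sum n (a : 'I_n -> R) : (\sum_i a i) ^+ 2 <= n%:R * \sum_i a i ^+ 2.
Proof.
case: n a => [|n] a; first by rewrite big_ord0 expr0n mul0r.
set S := \sum_i a i; set Q := \sum_i a i ^+ 2.
have h : 0 <= \sum_i (n.+1%:R * a i - S) ^+ 2 by apply: sumr_ge0 => i _; exact: sqr_ge0.
have e : \sum_i (n.+1%:R * a i - S) ^+ 2 = n.+1%:R ^+ 2 * Q - n.+1%:R * S ^+ 2.
  under eq_bigr => i _ do rewrite sqrrB.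
  rewrite big_split /= sumrB sumr_const card_ord.
  under eq_bigr => i _ do rewrite exprMn.
  rewrite -mulr_sumr.
  rewrite sumrMnl -mulr_suml -mulr_sumr -/S -/Q.
  rewrite -[S ^+ 2 *+ n.+1]mulr_natl. 
  rewrite expr2; ring.
rewrite e in h.
have hn : 0 < n.+1%:R :> R by rewrite ltr0n.
nra.
Qed.

Lemma adjmxE m p (A : 'M[R[i]]_(m, p)) i j : adjmx A i j = conjc (A j i).
Proof. by rewrite /adjmx !mxE. Qed.

Lemma outerE d (u : 'cV[R[i]]_d) k j : outer u k j = u k 0 * conjc (u j 0).
Proof. by rewrite /outer mxE big_ord1 adjmxE. Qed.

Lemma adj_mul d (u v : 'cV[R[i]]_d) :
  adjmx u *m v = (\sum_k conjc (u k 0) * v k 0)%:M.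
Proof.
apply/matrixP => i j; rewrite (ord1 i) (ord1 j) !mxE /=.
by apply: eq_bigr => k _; rewrite adjmxE.
Qed.

Lemma adj_self d (u : 'cV[R[i]]_d) :
  adjmx u *m u = (real_complex R (vnorm u ^+ 2))%:M.
Proof.
rewrite adj_mul vnorm_sqr; apply/matrixP => i j; rewrite !mxE rmorph_sum; congr (_ *+ _); apply: eq_bigr => k _.
by rewrite mulrC mulcJ.
Qed.

Lemma outer_sqr d (u : 'cV[R[i]]_d) :
  outer u *m outer u = real_complex R (vnorm u ^+ 2) *: outer u.
Proof.
rewrite /outer !mulmxA -[u *m adjmx u *m u]mulmxA adj_self.
by rewrite mul_mx_scalar -scalemxAl.
Qed.

Lemma part1 d n (hd : (0 < d)%N) (u : 'I_n -> 'cV[R[i]]_d) (C : R) (hC : 0 < C)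
  (ht : \sum_(i < n) outer (u i) = (real_complex R C)%:M) :
  C <= Num.sqrt (n%:R / d%:R) *
       Num.sqrt (specnorm (\sum_(i < n) (outer (u i) *m outer (u i)))).
Proof.
set S := \sum_(i < n) _.
pose a i := vnorm (u i) ^+ 2.
have h1 : forall k, \sum_i nc (u i k 0) ^+ 2 = C.
  move=> k; have := congr1 (fun M : 'M_d => M k k) ht; rewrite /= summxE mxE eqxx mulr1n.
  move=> h; apply: complexI; rewrite rmorph_sum -h; apply: eq_bigr => i _.
  by rewrite outerE mulcJ.
have h2 : \sum_i a i = C * d%:R.
  under eq_bigr do rewrite /a vnorm_sqr.
  rewrite exchange_big /=; under eq_bigr do rewrite h1.
  by rewrite sumr_const card_ord mulr_natr.
have hS : S = \sum_i real_complex R (a i) *: outer (u i).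
  by apply: eq_bigr => i _; rewrite outer_sqr.
have h3 : forall k, \sum_i a i * nc (u i k 0) ^+ 2 <= specnorm S.
  move=> k; apply: le_trans (specnorm_ge S (vnorm_delta k)).
  apply: le_trans (vnorm_entry _ k); rewrite -colE /col mxE hS summxE.
  have -> : \sum_i (real_complex R (a i) *: outer (u i)) k k =
     real_complex R (\sum_i a i * nc (u i k 0) ^+ 2).
    by rewrite rmorph_sum; apply: eq_bigr => i _; rewrite mxE outerE mulcJ -rmorphM.
  rewrite nc_real ger0_norm //; apply: sumr_ge0 => i _.
  by rewrite mulr_ge0 ?sqr_ge0.
have h4 : \sum_i a i ^+ 2 <= d%:R * specnorm S.
  have -> : \sum_i a i ^+ 2 = \sum_k \sum_i a i * nc (u i k 0) ^+ 2.
    rewrite exchange_big /=; apply: eq_bigr => i _.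
    by rewrite -mulr_sumr /a -vnorm_sqr expr2.
  have <- : \sum_(k < d) specnorm S = d%:R * specnorm S.
    by rewrite sumr_const card_ord mulr_natl.
  by apply: ler_sum => k _; exact: h3.
have h5 := cs_sum a.
rewrite h2 in h5.
have hd' : 0 < d%:R :> R by rewrite ltr0n.
have hsp : 0 <= specnorm S.
  have := h3 (Ordinal hd); apply: le_trans; apply: sumr_ge0 => i _.
  by rewrite mulr_ge0 ?sqr_ge0.
rewrite -sqrtrM ?divr_ge0 ?ler0n //.
rewrite -(ger0_norm (ltW hC)) -sqrtr_sqr ler_sqrt; last by rewrite mulr_ge0 ?divr_ge0 ?ler0n.
rewrite mulrAC ler_pdivlMr //.
have hn : 0 <= n%:R :> R by rewrite ler0n.
nra.
Qed.

Lemma kernel_vec d n (u : 'I_n -> 'cV[R[i]]_d) (J : {set 'I_n}) : (#|J| < d)%N ->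
  exists2 v : 'cV[R[i]]_d, v != 0 & forall i, i \in J -> outer (u i) *m v = 0.
Proof.
move=> hJ.
pose B : 'M[R[i]]_(d, #|J|) := \matrix_(k, j) conjc (u (enum_val j) k 0).
have hr : (0 < \rank (kermx B))%N.
  by rewrite mxrank_ker; have := rank_leq_col B; lia.
have hK : kermx B != 0 by rewrite -mxrank_eq0 -lt0n.
have [r hr'] : exists r, row r (kermx B) != 0.
  case: (pickP (fun r => row r (kermx B) != 0)) => [r hr'|h]; first by exists r.
  exfalso; move/eqP: hK; apply; apply/row_matrixP => r; rewrite row0.
  by apply/eqP; move/negbFE: (h r).
set w := row r (kermx B).
have hw : w *m B = 0 by rewrite /w -row_mul mulmx_ker row0.
exists w^T.
  have hw0 : w != 0 := hr'.
  by apply: contra hw0 => /eqP h; rewrite -(trmxK w) h trmx0.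
move=> i hi.
rewrite /outer -mulmxA adj_mul.
have -> : \sum_k conjc (u i k 0) * w^T k 0 = 0.
  transitivity ((w *m B) 0 (enum_rank_in hi i)); last by rewrite hw mxE.
  by rewrite mxE; apply: eq_bigr => k _; rewrite !mxE enum_rankK_in // mulrC.
by rewrite mul_mx_scalar scale0r.
Qed.

Lemma nc1 : nc 1 = 1.
Proof. by rewrite /= expr0n expr1n addr0 sqrtr1. Qed.

Lemma ncN1 : nc (-1) = 1.
Proof. by rewrite normcN nc1. Qed.

Lemma signed_ge d n (hd : (0 < d)%N) (u : 'I_n -> 'cV[R[i]]_d) (c : R) (hc : 0 <= c)
  (ht : \sum_(i < n) outer (u i) = (real_complex R c)%:M) (hn : (n <= 2 * d - 1)%N)
  (e : {ffun 'I_n -> bool}) : c <= signed_norm u e.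
Proof.
rewrite /signed_norm; set A := \sum_i _.
have key : forall (J : {set 'I_n}) (s : R[i]), nc s = 1 -> (#|J| < d)%N ->
    (forall i, i \notin J -> sgn R (e i) = s) -> c <= specnorm A.
  move=> J s hs hJ hsg; have [v hv0 hv] := kernel_vec u hJ.
  have hAv : A *m v = s *: (real_complex R c *: v).
    rewrite /A -[real_complex R c *: v]mul_scalar_mx -ht !mulmx_suml scaler_sumr; apply: eq_bigr => i _.
    rewrite -scalemxAl; case: (boolP (i \in J)) => hi; first by rewrite hv // !scaler0.
    by rewrite hsg.
  have hpos : 0 < vnorm v.
    rewrite lt_def vnorm_ge0 andbT; apply/eqP => /vnorm_eq0 h; by rewrite h eqxx in hv0.
  have := specnorm_geZ A hv0; rewrite hAv !vnormZ hs mul1r nc_real ger0_norm //.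
  by rewrite ler_pM2r.
pose P := [set i | e i].
case: (ltnP #|P| d) => hP.
  apply: (key P (-1)) => //; first exact: ncN1.
  by move=> i; rewrite inE; case: (e i).
apply: (key (~: P) 1); first exact: nc1.
  move: (cardsC P) hP hn hd; rewrite card_ord; move: #|P| #|~: P| => a b; lia.
by move=> i; rewrite !inE negbK; case: (e i).
Qed.

Lemma min_le_seed d n (u : 'I_n -> 'cV[R[i]]_d) :
  min_disc u <= signed_norm u [ffun=> true].
Proof.
rewrite /min_disc; elim/big_rec: _ => // e x _ hx.
by rewrite ge_min hx orbT.
Qed.

Lemma min_ge d n (u : 'I_n -> 'cV[R[i]]_d) c :
  (forall e, c <= signed_norm u e) -> c <= min_disc u.
Proof.
move=> h; rewrite /min_disc; elim/big_rec: _ => // e x _ hx.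
by rewrite le_min h hx.
Qed.

Lemma seedE d n (u : 'I_n -> 'cV[R[i]]_d) :
  signed_norm u [ffun=> true] = specnorm (\sum_(i < n) outer (u i)).
Proof.
rewrite /signed_norm; congr specnorm; apply: eq_bigr => i _.
by rewrite ffunE /= scale1r.
Qed.
End Aux.

Theorem theorem1p5 (R : realType) (d n : nat) (hd : (0 < d)%N) (hn : (0 < n)%N)
  (u : 'I_n -> 'cV[R[i]]_d)
  (tight : exists C : R, 0 < C /\
     \sum_(i < n) outer (u i) = (real_complex R C)%:M) :
  let sigma := Num.sqrt (specnorm (\sum_(i < n) (outer (u i) *m outer (u i)))) in
  min_disc u <= Num.sqrt (n%:R / d%:R) * sigma /\
  ((forall i, vnorm (u i) = 1) ->
   \sum_(i < n) outer (u i) = (real_complex R (n%:R / d%:R))%:M ->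
   (d <= n)%N -> (n <= 2 * d - 1)%N ->
   min_disc u = Num.sqrt (n%:R / d%:R) * sigma).
Proof.
move=> sigma; split.
  have [C [hC ht]] := tight.
  apply: le_trans (min_le_seed u) _.
  rewrite seedE ht (specnorm_scalar hd (ltW hC)) /sigma; exact: (part1 hd hC ht).
move=> hunit ht hdn hn2.
have hc : 0 <= n%:R / d%:R :> R by rewrite divr_ge0 ?ler0n.
have hS : \sum_(i < n) (outer (u i) *m outer (u i)) = \sum_(i < n) outer (u i).
  by apply: eq_bigr => i _; rewrite outer_sqr hunit expr1n rmorph1 scale1r.
have hsig : sigma = Num.sqrt (n%:R / d%:R).
  by rewrite /sigma hS ht specnorm_scalar.
rewrite hsig -expr2 sqr_sqrtr //.
apply/le_anti/andP; split.
  by apply: le_trans (min_le_seed u) _; rewrite seedE ht specnorm_scalar.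
apply: min_ge => e; exact: signed_ge.
Qed.
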